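(* For all $\lambda=(\lambda_i)_{i\in\mathbb Z},\ \mu=(\mu_i)_{i\in\mathbb Z}\in\mathbb N^n_\vartriangle$ one has $P_{\lambda,\mu}(v^2)=P'_{\lambda,\mu}(v^2)$, where $$P_{\lambda,\mu}(v^2)=\sum_{0\le\nu\le\lambda,\ \nu\in\mathbb N^n_\vartriangle} v^{2\sum_{i=1}^n\left(\frac{\nu_i^2-\nu_i}{2}+(\lambda_i-\nu_i)(\mu_i-\nu_{i-1})\right)}\prod_{i=1}^n(v^2-1)^{\nu_i}[\![\nu_i]\!]^!\left[\!\!\left[{\lambda_i\atop\nu_i}\right]\!\!\right]\left[\!\!\left[{\mu_{i+1}\atop\nu_i}\right]\!\!\right],$$ $$P'_{\lambda,\mu}(v^2)=\sum_{0\le\nu\le\lambda,\ \nu\in\mathbb N^n_\vartriangle} v^{2\sum_{i=1}^n\left(\frac{\nu_i^2-\nu_i}{2}+(\lambda_i-\nu_i)(\mu_{i+1}-\nu_{i+1})\right)}\prod_{i=1}^n(v^2-1)^{\nu_i}[\![\nu_i]\!]^!\left[\!\!\left[{\lambda_i\atop\nu_i}\right]\!\!\right]\left[\!\!\left[{\mu_i\atop\nu_i}\right]\!\!\right].$$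
   Context: $n\ge 2$ is fixed and $v$ is an indeterminate. $\mathbb N^n_\vartriangle$ is the set of sequences $\lambda=(\lambda_i)_{i\in\mathbb Z}$ of nonnegative integers with $\lambda_{i+n}=\lambda_i$ for all $i$ (so indices are read modulo $n$, e.g. $\nu_0=\nu_n$, $\mu_{n+1}=\mu_1$); $\nu\le\lambda$ means $\nu_i\le\lambda_i$ for all $i$. For integers $N\ge0$, $t\ge 0$: $[\![m]\!]=\frac{v^{2m}-1}{v^2-1}$, $[\![N]\!]^!=[\![1]\!][\![2]\!]\cdots[\![N]\!]$, and $\left[\!\left[{N\atop t}\right]\!\right]=\prod_{i=1}^t\frac{v^{2(N-i+1)}-1}{v^{2i}-1}$ (which is $0$ if $t>N$). The identity is an identity in $\mathbb Q(v)$. *)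

(* Defs.v *)
From HB Require Import structures.
From mathcomp Require Import all_boot all_order all_algebra.
Set Implicit Arguments. Unset Strict Implicit. Unset Printing Implicit Defensive.
Import Order.TTheory GRing.Theory Num.Theory.
Local Open Scope ring_scope.

Definition Qv : fieldType := {fraction {poly rat}}.
Definition vv : Qv := tofrac ('X : {poly rat}).

Definition qint (m : nat) : Qv := (vv ^+ (2 * m) - 1) / (vv ^+ 2 - 1).
Definition qfact (N : nat) : Qv := \prod_(1 <= i < N.+1) qint i.
(* [[N choose t]] = prod_{i=1}^t (v^{2(N-i+1)} - 1)/(v^{2i} - 1);
   for 1 <= i <= N+1 the natural number N.+1 - i equals N - i + 1, and for
   t > N the factor i = N+1 vanishes, as in the paper. *)
Definition qbin (N t : nat) : Qv :=
  \prod_(1 <= i < t.+1) ((vv ^+ (2 * (N.+1 - i)) - 1) / (vv ^+ (2 * i) - 1)).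

(* n-periodic sequences in N^n_triangle are represented by their values on
   the residues 'I_n; i-1 and i+1 are read cyclically (ord_pred, ordS). *)

Definition expP n (lam mu nu : 'I_n -> nat) : int :=
  \sum_(i < n) ((((nu i) ^ 2 - nu i)%N %/ 2)%:Z
                + ((lam i)%:Z - (nu i)%:Z) * ((mu i)%:Z - (nu (ord_pred i))%:Z)).
Definition expP' n (lam mu nu : 'I_n -> nat) : int :=
  \sum_(i < n) ((((nu i) ^ 2 - nu i)%N %/ 2)%:Z
                + ((lam i)%:Z - (nu i)%:Z) * ((mu (ordS i))%:Z - (nu (ordS i))%:Z)).

(* nu ranges over all n-periodic nu with 0 <= nu <= lam, encoded as finite
   functions with values bounded by max lam. *)
Definition bound n (lam : 'I_n -> nat) : nat := \max_(i < n) lam i.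

Definition Pfun n (lam mu : 'I_n -> nat) : Qv :=
  \sum_(nu : {ffun 'I_n -> 'I_(bound lam).+1} | [forall i, (nu i <= lam i)%N])
    vv ^ (2 * expP lam mu (fun i => nat_of_ord (nu i))) *
    \prod_(i < n) ((vv ^+ 2 - 1) ^+ (nu i) * qfact (nu i)
                   * qbin (lam i) (nu i) * qbin (mu (ordS i)) (nu i)).

Definition P'fun n (lam mu : 'I_n -> nat) : Qv :=
  \sum_(nu : {ffun 'I_n -> 'I_(bound lam).+1} | [forall i, (nu i <= lam i)%N])
    vv ^ (2 * expP' lam mu (fun i => nat_of_ord (nu i))) *
    \prod_(i < n) ((vv ^+ 2 - 1) ^+ (nu i) * qfact (nu i)
                   * qbin (lam i) (nu i) * qbin (mu i) (nu i)).

(* Main.v *)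
Require Import Defs.
From HB Require Import structures.
From mathcomp Require Import all_boot all_order all_algebra.
From mathcomp Require Import ring zify.
Set Implicit Arguments. Unset Strict Implicit. Unset Printing Implicit Defensive.
Import Order.TTheory GRing.Theory Num.Theory.
Local Open Scope ring_scope.

Local Notation q := (vv ^+ 2).

Lemma vvX_neq1 k : (0 < k)%N -> vv ^+ k != 1.
Proof.
move=> k0; rewrite /vv -tofrac1 -tofracXn tofrac_eq.
apply/eqP => /(congr1 (fun p : {poly rat} => size p)).
by rewrite size_polyXn size_poly1; case: k k0.
Qed.

Lemma qX1_neq0 k : (0 < k)%N -> q ^+ k - 1 != 0.
Proof. by move=> k0; rewrite subr_eq0 -exprM vvX_neq1 // muln_gt0. Qed.

Definition Dn t : Qv := \prod_(1 <= i < t.+1) (q ^+ i - 1).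
Definition Nm N t : Qv := \prod_(1 <= i < t.+1) (q ^+ (N.+1 - i) - 1).

Lemma Dn_neq0 t : Dn t != 0.
Proof.
rewrite /Dn prodf_seq_neq0; apply/allP => i; rewrite mem_index_iota => /andP[i1 _].
by rewrite qX1_neq0.
Qed.

Lemma qbinE N t : qbin N t = Nm N t / Dn t.
Proof.
rewrite /qbin /Nm /Dn -prodf_div; apply: eq_bigr => i _.
by rewrite !exprM.
Qed.

Lemma NmS N t : Nm N t.+1 = Nm N t * (q ^+ (N - t) - 1).
Proof. by rewrite /Nm big_nat_recr //= subSS. Qed.

Lemma DnS t : Dn t.+1 = Dn t * (q ^+ t.+1 - 1).
Proof. by rewrite /Dn big_nat_recr. Qed.

Lemma Nm0 N : Nm N 0 = 1.
Proof. by rewrite /Nm big_geq. Qed.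

Lemma Dn0 : Dn 0 = 1.
Proof. by rewrite /Dn big_geq. Qed.

Lemma Nm_gt N t : (N < t)%N -> Nm N t = 0.
Proof.
elim: t => // t IH; rewrite NmS ltnS leq_eqVlt => /orP[/eqP->|/IH->].
  by rewrite subnn expr0 subrr mulr0.
by rewrite mul0r.
Qed.

Lemma qbin_gt N t : (N < t)%N -> qbin N t = 0.
Proof. by move=> h; rewrite qbinE Nm_gt // mul0r. Qed.

Lemma NmSS N t : Nm N.+1 t.+1 = (q ^+ N.+1 - 1) * Nm N t.
Proof.
rewrite /Nm big_nat_recl // subn1 /=.
Qed.

Lemma Nm_add N a b : Nm N a * Nm (N - a) b = Nm N (a + b).
Proof.
elim: b => [|b IH]; first by rewrite Nm0 mulr1 addn0.
by rewrite addnS !NmS mulrA IH subnDA.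
Qed.

Lemma msym N a b : qbin N a * qbin (N - a) b = qbin N b * qbin (N - b) a.
Proof.
rewrite !qbinE.
have -> : Nm N a / Dn a * (Nm (N - a) b / Dn b) = Nm N (a + b) / (Dn a * Dn b).
  by rewrite mulf_div Nm_add.
have -> : Nm N b / Dn b * (Nm (N - b) a / Dn a) = Nm N (b + a) / (Dn b * Dn a).
  by rewrite mulf_div Nm_add.
by rewrite addnC [Dn b * _]mulrC.
Qed.

Lemma pascal_aux1 (F : fieldType) (D M x y : F) : D != 0 -> x - 1 != 0 ->
  (x * y - 1) * M / (D * (x - 1)) = x * (M * (y - 1) / (D * (x - 1))) + M / D.
Proof. by move=> h1 h2; field; rewrite h1 h2. Qed.

Lemma pascal_aux2 (F : fieldType) (D x y z : F) : D != 0 -> x - 1 != 0 ->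
  (z - 1) * 0 / (D * (x - 1)) = x * (0 * (y - 1) / (D * (x - 1))) + 0 / D.
Proof. by move=> h1 h2; rewrite !(mulr0, mul0r) addr0. Qed.

Lemma pascal a j : qbin a.+1 j.+1 = q ^+ j.+1 * qbin a j.+1 + qbin a j.
Proof.
rewrite !qbinE NmSS NmS DnS.
have h1 := Dn_neq0 j; have h2 := qX1_neq0 (ltn0Sn j).
case: (leqP j a) => ja.
  have -> : q ^+ a.+1 = q ^+ j.+1 * q ^+ (a - j).
    by rewrite -exprD; congr (_ ^+ _); lia.
  exact: pascal_aux1.
rewrite (Nm_gt ja); exact: pascal_aux2.
Qed.

Definition g k : Qv := (q - 1) ^+ k * qfact k * q ^+ ((k ^ 2 - k) %/ 2).

Lemma qintE m : qint m = (q ^+ m - 1) / (q - 1).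
Proof. by rewrite /qint exprM. Qed.

Lemma qfactS k : qfact k.+1 = qfact k * qint k.+1.
Proof. by rewrite /qfact big_nat_recr. Qed.

Lemma gS_aux (F : fieldType) (c P Fk E Q x y M D : F) : c != 0 -> x - 1 != 0 -> D != 0 ->
  P * c * (Fk * ((x - 1) / c)) * (E * Q) * (M * (y - 1) / (D * (x - 1)))
  = P * Fk * E * (M / D) * (Q * (y - 1)).
Proof. by move=> h1 h2 h3; field; rewrite h1 h2 h3. Qed.

Lemma gS b k : g k.+1 * qbin b k.+1 = g k * qbin b k * (q ^+ k * (q ^+ (b - k) - 1)).
Proof.
rewrite /g qfactS qintE !qbinE NmS DnS exprSr.
have -> : ((k.+1 ^ 2 - k.+1) %/ 2 = (k ^ 2 - k) %/ 2 + k)%N.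
  rewrite !expnS expn0 !muln1.
  have -> : (k.+1 * k.+1 - k.+1 = (k * k - k) + 2 * k)%N.
    case: k => // k; rewrite !mulSn !mulnS; lia.
  by rewrite divnDr ?dvdn_mulr // mulKn.
rewrite exprD; apply: gS_aux.
- by have := qX1_neq0 (ltn0Sn 0); rewrite expr1.
- exact: qX1_neq0.
- exact: Dn_neq0.
Qed.

Lemma qbin0 N : qbin N 0 = 1.
Proof. by rewrite qbinE Nm0 Dn0 divr1. Qed.

Lemma g0 : g 0 = 1.
Proof. by rewrite /g /qfact big_geq // !expr0 !mul1r. Qed.

Lemma key_aux (F : comRingType) (G A B x y : F) :
  G * (x * A) * B + G * B * (x * (y - 1)) * A = G * A * B * (x * y).
Proof. by ring. Qed.

Lemma key_nat a b K : (a < K)%N -> q ^+ (a * b) = \sum_(0 <= k < K) g k * qbin a k * qbin b k.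
Proof.
elim: a K => [|a IH] K aK.
  case: K aK => // K _; rewrite big_nat_recl // g0 !qbin0 mul0n expr0 !mul1r.
  by rewrite big1 ?addr0 // => i _; rewrite qbin_gt // mulr0 mul0r.
case: K aK => // K aK.
have -> : \sum_(0 <= k < K.+1) g k * qbin a.+1 k * qbin b k =
   \sum_(0 <= k < K.+1) g k * (q ^+ k * qbin a k) * qbin b k
   + \sum_(0 <= k < K.+1) (if k is j.+1 then g k * qbin a j * qbin b k else 0).
  rewrite -big_split /=; apply: eq_bigr => -[|k] _.
    by rewrite !qbin0 expr0 !mulr1 addr0.
  by rewrite pascal !(mulrDr, mulrDl) mulrA.
rewrite [X in _ + X]big_nat_recl //= add0r.
have -> : \sum_(0 <= i < K) g i.+1 * qbin a i * qbin b i.+1 =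
    \sum_(0 <= i < K.+1) g i * qbin b i * (q ^+ i * (q ^+ (b - i) - 1)) * qbin a i.
  rewrite big_nat_recr //= (qbin_gt (N := a) (t := K)) // mulr0 addr0.
  by apply: eq_bigr => i _; rewrite mulrAC gS.
rewrite -big_split /= mulSn exprD mulrC (IH K.+1) 1?ltnW // mulr_suml.
apply: eq_bigr => k _; rewrite key_aux.
case: (leqP k b) => kb.
  by rewrite -exprD subnKC.
by rewrite (qbin_gt kb) !mulr0 !mul0r.
Qed.

Lemma key a b K : (a < K)%N -> q ^+ (a * b) = \sum_(k < K) g k * qbin a k * qbin b k.
Proof. by move=> aK; rewrite (key_nat b aK) big_mkord. Qed.

Definition Phi n (lam mu nu ka : 'I_n -> nat) : Qv :=
  \prod_(i < n) (g (nu i) * g (ka i) * (qbin (lam i) (nu i) * qbin (lam i - nu i) (ka i))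
     * (qbin (mu i) (nu (ord_pred i)) * qbin (mu i - nu (ord_pred i)) (ka i))).

Definition Psi n (lam mu nu ka : 'I_n -> nat) : Qv :=
  \prod_(i < n) (g (nu i) * g (ka i) * (qbin (lam i) (nu i) * qbin (lam i - nu i) (ka i))
     * (qbin (mu i) (nu i) * qbin (mu i - nu i) (ka (ord_pred i)))).

Lemma Psi_Phi n (lam mu nu ka : 'I_n -> nat) : Psi lam mu nu ka = Phi lam mu ka nu.
Proof.
apply: eq_bigr => i _.
by rewrite [g (nu i) * _]mulrC (msym (lam i) (nu i) (ka i)) (msym (mu i) (nu i)).
Qed.

Lemma prod0 n (F : 'I_n -> Qv) j : F j = 0 -> \prod_(i < n) F i = 0.
Proof. by move=> h; rewrite (bigD1 j) //= h mul0r. Qed.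

Lemma expP_nat n (lam mu nu : 'I_n -> nat) :
  (forall i, nu i <= lam i /\ nu (ord_pred i) <= mu i)%N ->
  2 * expP lam mu nu = Posz (2 * \sum_(i < n) ((nu i ^ 2 - nu i) %/ 2
        + (lam i - nu i) * (mu i - nu (ord_pred i))))%N.
Proof.
move=> h; rewrite PoszM -[Posz (\sum_(i < n) _)]natz natr_sum; congr (_ * _).
apply: eq_bigr => i _; have [h1 h2] := h i.
by rewrite natz PoszD PoszM -!subzn.
Qed.

Lemma reorgP (F : comRingType) (Cq P Fq Bl Bm Gk Ba Bb : F) :
  Cq * (P * Fq * Bl * Bm) * (Gk * Ba * Bb) = (P * Fq * Cq * Gk * (Bl * Ba) * Bb) * Bm.
Proof. by ring. Qed.

Lemma reorgPhi (F : comRingType) (G1 G2 Bl Ba Bm Bb : F) :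
  G1 * G2 * (Bl * Ba) * (Bm * Bb) = (G1 * G2 * (Bl * Ba) * Bb) * Bm.
Proof. by ring. Qed.

Lemma termP_expand n K (lam mu nu : 'I_n -> nat) (hK : forall i, (lam i < K)%N) :
  vv ^ (2 * expP lam mu nu) *
    \prod_(i < n) ((vv ^+ 2 - 1) ^+ (nu i) * qfact (nu i)
                   * qbin (lam i) (nu i) * qbin (mu (ordS i)) (nu i))
  = \sum_(ka : {ffun 'I_n -> 'I_K}) Phi lam mu nu (fun i => nat_of_ord (ka i)).
Proof.
case: (boolP [forall i, (nu i <= lam i)%N && (nu (ord_pred i) <= mu i)%N]) => [/forallP h|].
  have h' : forall i, (nu i <= lam i /\ nu (ord_pred i) <= mu i)%N.
    by move=> i; have /andP[] := h i.
  rewrite expP_nat // -exprnP exprM -prodrXr -big_split /=.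
  under eq_bigr => i _.
    rewrite exprD mulrAC (key (mu i - nu (ord_pred i)) (leq_ltn_trans (leq_subr _ _) (hK i))).
    rewrite mulr_sumr.
  over.
  rewrite bigA_distr_bigA /=; apply: eq_bigr => ka _.
  under eq_bigr => i _ do rewrite reorgP -/(g (nu i)).
  rewrite /Phi; under [RHS]eq_bigr => i _ do rewrite reorgPhi.
  rewrite !big_split /=; congr (_ * _).
  by rewrite [RHS](reindex_inj (@ordS_inj n)); apply: eq_bigr => i _; rewrite ordSK.
rewrite negb_forall => /existsP[i]; rewrite negb_and -!ltnNge => hi.
have hz : forall ka : 'I_n -> nat, Phi lam mu nu ka = 0.
  move=> ka; apply: (prod0 (j := i)).
  case/orP: hi => hi; first by rewrite (qbin_gt hi) !(mulr0, mul0r).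
  by rewrite (qbin_gt hi) !(mulr0, mul0r).
rewrite [RHS]big1; last by move=> ka _; rewrite hz.
case/orP: hi => hi.
  by rewrite (prod0 (j := i)) ?mulr0 // (qbin_gt hi) mulr0 mul0r.
by rewrite (prod0 (j := ord_pred i)) ?mulr0 // ord_predK (qbin_gt hi) mulr0.
Qed.

Lemma expP'_nat n (lam mu nu : 'I_n -> nat) :
  (forall i, nu i <= lam i /\ nu i <= mu i)%N ->
  2 * expP' lam mu nu = Posz (2 * \sum_(i < n) ((nu i ^ 2 - nu i) %/ 2
        + (lam i - nu i) * (mu (ordS i) - nu (ordS i))))%N.
Proof.
move=> h; rewrite PoszM -[Posz (\sum_(i < n) _)]natz natr_sum; congr (_ * _).
apply: eq_bigr => i _; have [h1 _] := h i; have [_ h2] := h (ordS i).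
by rewrite natz PoszD PoszM -!subzn.
Qed.

Lemma reorgP' (F : comRingType) (Cq P Fq Bl Bm Gk Ba Bb : F) :
  Cq * (P * Fq * Bl * Bm) * (Gk * Ba * Bb) = (P * Fq * Cq * Gk * (Bl * Ba) * Bm) * Bb.
Proof. by ring. Qed.

Lemma reorgPsi (F : comRingType) (G1 G2 Bl Ba Bm Bb : F) :
  G1 * G2 * (Bl * Ba) * (Bm * Bb) = (G1 * G2 * (Bl * Ba) * Bm) * Bb.
Proof. by ring. Qed.

Lemma termP'_expand n K (lam mu nu : 'I_n -> nat) (hK : forall i, (lam i < K)%N) :
  vv ^ (2 * expP' lam mu nu) *
    \prod_(i < n) ((vv ^+ 2 - 1) ^+ (nu i) * qfact (nu i)
                   * qbin (lam i) (nu i) * qbin (mu i) (nu i))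
  = \sum_(ka : {ffun 'I_n -> 'I_K}) Psi lam mu nu (fun i => nat_of_ord (ka i)).
Proof.
case: (boolP [forall i, (nu i <= lam i)%N && (nu i <= mu i)%N]) => [/forallP h|].
  have h' : forall i, (nu i <= lam i /\ nu i <= mu i)%N.
    by move=> i; have /andP[] := h i.
  rewrite expP'_nat // -exprnP exprM -prodrXr -big_split /=.
  under eq_bigr => i _.
    rewrite exprD mulrAC (key (mu (ordS i) - nu (ordS i)) (leq_ltn_trans (leq_subr _ _) (hK i))).
    rewrite mulr_sumr.
  over.
  rewrite bigA_distr_bigA /=; apply: eq_bigr => ka _.
  under eq_bigr => i _ do rewrite reorgP' -/(g (nu i)).
  rewrite /Psi; under [RHS]eq_bigr => i _ do rewrite reorgPsi.
  rewrite !big_split /=; congr (_ * _).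
  by rewrite [RHS](reindex_inj (@ordS_inj n)); apply: eq_bigr => i _; rewrite ordSK.
rewrite negb_forall => /existsP[i]; rewrite negb_and -!ltnNge => hi.
have hz : forall ka : 'I_n -> nat, Psi lam mu nu ka = 0.
  move=> ka; apply: (prod0 (j := i)).
  case/orP: hi => hi; first by rewrite (qbin_gt hi) !(mulr0, mul0r).
  by rewrite (qbin_gt hi) !(mulr0, mul0r).
rewrite [RHS]big1; last by move=> ka _; rewrite hz.
rewrite (prod0 (j := i)) ?mulr0 //.
by case/orP: hi => hi; rewrite (qbin_gt hi) ?mulr0 ?mul0r.
Qed.

Theorem corollary3p9p6 (n : nat) (hn : (2 <= n)%N) (lam mu : 'I_n -> nat) :
  Pfun lam mu = P'fun lam mu.
Proof.
have hK : forall i, (lam i < (bound lam).+1)%N.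
  by move=> i; rewrite ltnS; exact: (leq_bigmax i).
rewrite /Pfun /P'fun !big_mkcond /=.
transitivity (\sum_(nu : {ffun 'I_n -> 'I_(bound lam).+1})
   \sum_(ka : {ffun 'I_n -> 'I_(bound lam).+1})
      Phi lam mu (fun i => nat_of_ord (nu i)) (fun i => nat_of_ord (ka i))).
  apply: eq_big => // nu _; case: ifP => [_|/negbT].
    exact: termP_expand.
  rewrite negb_forall => /existsP[i]; rewrite -ltnNge => hi.
  rewrite big1 // => ka _; apply: (prod0 (j := i)).
  by rewrite (qbin_gt hi) !(mulr0, mul0r).
transitivity (\sum_(nu : {ffun 'I_n -> 'I_(bound lam).+1})
   \sum_(ka : {ffun 'I_n -> 'I_(bound lam).+1})
      Psi lam mu (fun i => nat_of_ord (nu i)) (fun i => nat_of_ord (ka i))); last first.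
  rewrite [RHS]big_mkcond; apply: eq_big => // nu _; case: ifP => [_|/negbT].
    by rewrite (termP'_expand mu _ hK).
  rewrite negb_forall => /existsP[i]; rewrite -ltnNge => hi.
  rewrite big1 // => ka _; apply: (prod0 (j := i)).
  by rewrite (qbin_gt hi) !(mulr0, mul0r).
rewrite exchange_big /=; apply: eq_bigr => nu _; apply: eq_bigr => ka _.
by rewrite Psi_Phi.
Qed.
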